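(* There exist absolute constants $\kappa_1,\kappa_2>1$ such that if $b_1\ge1$, $b_2\ge\kappa_1b_1$ and $b_3\ge\kappa_2b_2$, then for all $\beta\ge1$ (and $\gamma=(\alpha,\beta)$), $\mathcal{N}_{\gamma,2}(\mathcal{C}^{(3)}_{b_1,b_2,b_3})\subset\mathcal{C}^{(3)}_{b_1,b_2,b_3}$.
   Context: For $\beta\ge1$ let $g_{\gamma,2}:[0,1]\to[\tfrac12,1]$, $g_{\gamma,2}(x)=\tfrac12(x^{1/\beta}+1)$, be the inverse of $x\mapsto2^\beta(x-\tfrac12)^\beta$ on $[\tfrac12,1]$ (it does not depend on $\alpha$), and $\mathcal{N}_{\gamma,2}(\varphi)(x)=g_{\gamma,2}'(x)\,\varphi(g_{\gamma,2}(x))$. For $b_1,b_2,b_3>0$, $\mathcal{C}^{(3)}_{b_1,b_2,b_3}$ is the set of $\varphi\in C^3((0,1])$ with $\varphi(x)\ge0$, $|\varphi'(x)|\le\frac{b_1}{x}\varphi(x)$, $|\varphi''(x)|\le\frac{b_2}{x^2}\varphi(x)$, $|\varphi'''(x)|\le\frac{b_3}{x^3}\varphi(x)$ for all $x\in(0,1]$. *)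

(* Defs.v *)
From Stdlib Require Import Reals Lra.
From Coquelicot Require Import Coquelicot.
Open Scope R_scope.

Definition I01 (x : R) : Prop := 0 < x <= 1.

Definition is_deriv_on_I01 (f f' : R -> R) : Prop :=
  forall x, I01 x -> forall eps, 0 < eps -> exists delta, 0 < delta /\
    forall y, I01 y -> y <> x -> Rabs (y - x) < delta ->
      Rabs ((f y - f x) / (y - x) - f' x) < eps.

Definition continuous_on_I01 (f : R -> R) : Prop :=
  forall x, I01 x -> forall eps, 0 < eps -> exists delta, 0 < delta /\
    forall y, I01 y -> Rabs (y - x) < delta -> Rabs (f y - f x) < eps.

Definition C3class (b1 b2 b3 : R) (phi : R -> R) : Prop :=
  exists phi1 phi2 phi3 : R -> R,
    is_deriv_on_I01 phi phi1 /\ is_deriv_on_I01 phi1 phi2 /\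
    is_deriv_on_I01 phi2 phi3 /\ continuous_on_I01 phi3 /\
    forall x, I01 x ->
      0 <= phi x /\
      Rabs (phi1 x) <= b1 / x * phi x /\
      Rabs (phi2 x) <= b2 / x ^ 2 * phi x /\
      Rabs (phi3 x) <= b3 / x ^ 3 * phi x.

(* g_{gamma,2}(x) = (x^{1/beta} + 1)/2 ; independent of alpha. *)
Definition g2 (beta : R) (x : R) : R := (Rpower x (1 / beta) + 1) / 2.

Definition N2 (beta : R) (phi : R -> R) (x : R) : R :=
  Derive (g2 beta) x * phi (g2 beta x).

(* Main.v *)
Require Import Defs.
From Stdlib Require Import Reals Lra.
From Coquelicot Require Import Coquelicot.
Open Scope R_scope.

Definition Fw (x : R) := within (fun y => I01 y /\ y <> x) (locally x).
Definition Cw (x : R) := within I01 (locally x).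
#[local] Instance Fw_filter x : Filter (Fw x) := within_filter _ _ _ (@filter_filter _ _ (locally_filter x)).
#[local] Instance Cw_filter x : Filter (Cw x) := within_filter _ _ _ (@filter_filter _ _ (locally_filter x)).
Definition Qt (f : R -> R) x y := (f y - f x) / (y - x).
Definition dat (f : R -> R) (v : R) x := filterlim (Qt f x) (Fw x) (locally v).
Definition cat (f : R -> R) x := filterlim f (Cw x) (locally (f x)).

Lemma ballR (x e y : R) : ball x e y <-> Rabs (y - x) < e.
Proof. reflexivity. Qed.

Lemma deriv_equiv f f' :
  (forall x, I01 x -> dat f (f' x) x) -> is_deriv_on_I01 f f'.
Proof.
  intros H x Hx eps He.
  specialize (H x Hx). apply filterlim_locally with (eps := mkposreal eps He) in H.
  destruct H as [d Hd]. exists d. split. apply cond_pos.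
  intros y Hy Hyx Hyd. apply (Hd y). apply ballR. exact Hyd. split; assumption.
Qed.

Lemma deriv_equiv2 f f' :
  is_deriv_on_I01 f f' -> forall x, I01 x -> dat f (f' x) x.
Proof.
  intros H x Hx. apply filterlim_locally. intros eps.
  destruct (H x Hx eps (cond_pos eps)) as [d [Hd H2]].
  exists (mkposreal d Hd). intros y Hy [Hy1 Hy2]. apply ballR. apply H2; auto.
Qed.

Lemma cont_equiv f :
  (forall x, I01 x -> cat f x) -> continuous_on_I01 f.
Proof.
  intros H x Hx eps He.
  specialize (H x Hx). apply filterlim_locally with (eps := mkposreal eps He) in H.
  destruct H as [d Hd]. exists d. split. apply cond_pos.
  intros y Hy Hyd. apply (Hd y). apply ballR. exact Hyd. assumption.
Qed.

Lemma cont_equiv2 f :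
  continuous_on_I01 f -> forall x, I01 x -> cat f x.
Proof.
  intros H x Hx. apply filterlim_locally. intros eps.
  destruct (H x Hx eps (cond_pos eps)) as [d [Hd H2]].
  exists (mkposreal d Hd). intros y Hy Hy1. apply ballR. apply H2; auto.
Qed.

Section Lims.
Context {T : Type} {F : (T -> Prop) -> Prop} {FF : Filter F}.
Lemma lim_plus (f g : T -> R) a b :
  filterlim f F (locally a) -> filterlim g F (locally b) ->
  filterlim (fun x => f x + g x) F (locally (a + b)).
Proof.
  intros Hf Hg. apply (filterlim_comp_2 f g Rplus Hf Hg).
  apply (filterlim_plus a b).
Qed.
Lemma lim_mult (f g : T -> R) a b :
  filterlim f F (locally a) -> filterlim g F (locally b) ->
  filterlim (fun x => f x * g x) F (locally (a * b)).
Proof.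
  intros Hf Hg. apply (filterlim_comp_2 f g Rmult Hf Hg).
  apply (filterlim_mult a b).
Qed.
End Lims.

Lemma le_w x (D : R -> Prop) : filter_le (within D (locally x)) (locally x).
Proof. intros P HP. unfold within. revert HP. apply filter_imp. auto. Qed.

Lemma Fw_id x : filterlim (fun y => y) (Fw x) (locally x).
Proof. apply (filterlim_filter_le_1 (F := locally x) _ (le_w x _)). apply filterlim_id. Qed.
Lemma Cw_id x : filterlim (fun y => y) (Cw x) (locally x).
Proof. apply (filterlim_filter_le_1 (F := locally x) _ (le_w x _)). apply filterlim_id. Qed.

Lemma Fw_to_Cw (f : R -> R) x :
  filterlim f (Fw x) (locally (f x)) -> filterlim f (Cw x) (locally (f x)).
Proof.
  intros H P HP. specialize (H P HP). unfold filtermap, Fw, Cw, within in *.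
  revert H. apply filter_imp. intros y H Hy.
  destruct (Req_dec y x) as [->|Hne]. apply locally_singleton, HP. apply H; auto.
Qed.

Lemma dat_cont f v x : dat f v x -> cat f x.
Proof.
  intros H. apply Fw_to_Cw.
  apply filterlim_ext_loc with (f := fun y => f x + Qt f x y * (y - x)).
  { unfold Fw, within. apply filter_forall. intros y [_ Hy]. unfold Qt.
    field. lra. }
  assert (E : @eq R (f x) (f x + v * (x + - x))) by ring.
  assert (L : filterlim (fun y => f x + Qt f x y * (y - x)) (Fw x) (locally (f x + v * (x + - x)))).
  2: rewrite <- E in L; exact L.
  apply lim_plus. apply filterlim_const. apply lim_mult. exact H.
  apply lim_plus. apply Fw_id. apply filterlim_const.
Qed.

Lemma smooth_dat A a x : is_derive A x a -> dat A a x.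
Proof.
  intros H. apply is_derive_Reals in H. apply filterlim_locally. intros eps.
  destruct (H eps (cond_pos eps)) as [d Hd].
  exists d. intros y Hy [_ Hyx]. apply ballR in Hy. apply ballR.
  specialize (Hd (y - x)). assert (E : forall z w : R, z + (w - z) = w) by (intros; ring). rewrite E in Hd.
  apply Hd. lra. exact Hy.
Qed.

Lemma smooth_Fw (A : R -> R) a x : is_derive A x a -> filterlim A (Fw x) (locally (A x)).
Proof.
  intros H. apply (filterlim_filter_le_1 (F := locally x) _ (le_w x _)).
  exact (@ex_derive_continuous R_AbsRing R_NormedModule A x (ex_intro _ a H)).
Qed.

Lemma smooth_Cw (A : R -> R) a x : is_derive A x a -> cat A x.
Proof.
  intros H. apply (filterlim_filter_le_1 (F := locally x) _ (le_w x _)).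
  exact (@ex_derive_continuous R_AbsRing R_NormedModule A x (ex_intro _ a H)).
Qed.

Lemma dat_plus f k a b x : dat f a x -> dat k b x -> dat (fun y => f y + k y) (a + b) x.
Proof.
  intros Hf Hk. unfold dat.
  apply filterlim_ext_loc with (f := fun y => Qt f x y + Qt k x y).
  { unfold Fw, within. apply filter_forall. intros y [_ Hy]. unfold Qt.
    field. lra. }
  apply lim_plus; assumption.
Qed.

Lemma dat_prod (A H : R -> R) a h x : is_derive A x a -> dat H h x ->
  dat (fun y => A y * H y) (a * H x + A x * h) x.
Proof.
  intros HA HH. unfold dat.
  apply filterlim_ext_loc with (f := fun y => Qt A x y * H y + A x * Qt H x y).
  { unfold Fw, within. apply filter_forall. intros y [_ Hy]. unfold Qt.
    field. lra. }
  apply lim_plus. apply lim_mult. apply smooth_dat; auto.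
  pose proof (dat_cont _ _ _ HH) as HC.
  apply (filterlim_filter_le_1 (F := Cw x)). 2: exact HC.
  intros P HP. unfold Fw, Cw, within in *. revert HP. apply filter_imp. tauto.
  apply lim_mult. apply filterlim_const. exact HH.
Qed.

Lemma dat_ext f k v x : (forall y, I01 y -> f y = k y) -> I01 x -> dat f v x -> dat k v x.
Proof.
  intros He Hx H. unfold dat.
  apply filterlim_ext_loc with (f := Qt f x).
  { unfold Fw, within. apply filter_forall. intros y [Hy _]. unfold Qt.
    rewrite !He; auto. }
  exact H.
Qed.

Lemma dat_comp (H g : R -> R) h gd x : I01 x -> (forall y, I01 y -> I01 (g y)) ->
  (forall y z, I01 y -> I01 z -> y <> z -> g y <> g z) ->
  is_derive g x gd -> dat H h (g x) -> dat (fun y => H (g y)) (h * gd) x.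
Proof.
  intros Hx Hg Hinj Hd HH. unfold dat.
  apply filterlim_ext_loc with (f := fun y => Qt H (g x) (g y) * Qt g x y).
  { unfold Fw, within. apply filter_forall. intros y [Hy Hyx]. unfold Qt.
    pose proof (Hinj y x Hy Hx Hyx). field. lra. }
  apply lim_mult. 2: apply smooth_dat; auto.
  apply (filterlim_comp _ _ _ g (Qt H (g x)) (Fw x) (Fw (g x))). 2: exact HH.
  intros P HP. unfold Fw, within in HP |- *. unfold filtermap.
  assert (Hc : filterlim g (locally x) (locally (g x))).
  { exact (@ex_derive_continuous R_AbsRing R_NormedModule g x (ex_intro _ gd Hd)). }
  specialize (Hc _ HP). unfold filtermap in Hc. revert Hc. apply filter_imp.
  intros y Hy [Hy1 Hy2]. apply Hy. split. apply Hg; auto. apply Hinj; auto.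
Qed.

Lemma cat_plus f k x : cat f x -> cat k x -> cat (fun y => f y + k y) x.
Proof. intros. apply lim_plus; auto. Qed.
Lemma cat_mult f k x : cat f x -> cat k x -> cat (fun y => f y * k y) x.
Proof. intros. apply lim_mult; auto. Qed.
Lemma cat_comp (H g : R -> R) gd x : I01 x -> (forall y, I01 y -> I01 (g y)) ->
  is_derive g x gd -> cat H (g x) -> cat (fun y => H (g y)) x.
Proof.
  intros Hx Hg Hd HH. unfold cat.
  apply (filterlim_comp _ _ _ g H (Cw x) (Cw (g x))). 2: exact HH.
  intros P HP. unfold Cw, within in HP |- *. unfold filtermap.
  assert (Hc : filterlim g (locally x) (locally (g x))).
  { exact (@ex_derive_continuous R_AbsRing R_NormedModule g x (ex_intro _ gd Hd)). }
  specialize (Hc _ HP). unfold filtermap in Hc. revert Hc. apply filter_imp.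
  intros y Hy Hy1. apply Hy. apply Hg; auto.
Qed.

Definition gg s x := (Rpower x s + 1) / 2.
Definition T s a m j (F : R -> R) x := a * Rpower x (INR m * s - INR j) * F (gg s x).

Lemma rpow_der a r x : 0 < x -> is_derive (fun y => a * Rpower y r) x (a * (r * Rpower x (r - 1))).
Proof.
  intros Hx. apply is_derive_scal. apply is_derive_Reals. apply derivable_pt_lim_power; auto.
Qed.

Lemma gg_der s x : 0 < x -> is_derive (gg s) x (s / 2 * Rpower x (s - 1)).
Proof.
  intros Hx. unfold gg.
  apply is_derive_ext with (f := fun y => / 2 * Rpower y s + / 2 * 1).
  { intros t. simpl. field. }
  replace (s / 2 * Rpower x (s - 1)) with (/2 * (s * Rpower x (s - 1)) + 0) by field.
  apply (is_derive_plus (K := R_AbsRing) (V := R_NormedModule)).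
  apply rpow_der; auto. change (0:R) with (@zero R_NormedModule). apply (is_derive_const (K := R_AbsRing) (V := R_NormedModule)).
Qed.

Lemma P_bounds s x : 0 < s -> I01 x -> 0 < Rpower x s <= 1.
Proof.
  intros Hs [Hx1 Hx2]. split. unfold Rpower. apply exp_pos.
  assert (Hl : ln x <= 0) by (rewrite <- ln_1; apply ln_le; lra).
  assert (Hsl : s * ln x <= 0) by nra.
  unfold Rpower. rewrite <- exp_0. destruct Hsl as [H|H].
  left. apply exp_increasing. exact H. rewrite H. right. reflexivity.
Qed.

Lemma gg_I01 s x : 0 < s -> I01 x -> I01 (gg s x).
Proof. intros Hs Hx. pose proof (P_bounds s x Hs Hx). unfold gg, I01. lra. Qed.

Lemma gg_inj s y z : 0 < s -> I01 y -> I01 z -> y <> z -> gg s y <> gg s z.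
Proof.
  intros Hs Hy Hz Hyz E. apply Hyz. unfold gg, Rpower in E.
  assert (E2 : exp (s * ln y) = exp (s * ln z)) by lra.
  apply exp_inv in E2. apply ln_inv. destruct Hy; lra. destruct Hz; lra.
  apply Rmult_eq_reg_l with s; lra.
Qed.

Lemma term_dat s a m j (F F' : R -> R) x : 0 < s -> I01 x ->
  (forall z, I01 z -> dat F (F' z) z) ->
  dat (T s a m j F) (T s (a * (INR m * s - INR j)) m (S j) F x + T s (a * (s / 2)) (S m) (S j) F' x) x.
Proof.
  intros Hs Hx HF.
  assert (Hx0 : 0 < x) by (destruct Hx; lra).
  pose proof (dat_prod (fun y => a * Rpower y (INR m * s - INR j)) (fun y => F (gg s y)) _ _ x
    (rpow_der a (INR m * s - INR j) x Hx0)
    (dat_comp F (gg s) _ _ x Hx (fun y Hy => gg_I01 s y Hs Hy) (fun y z Hy Hz => gg_inj s y z Hs Hy Hz)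
       (gg_der s x Hx0) (HF _ (gg_I01 s x Hs Hx)))) as H.
  unfold dat in *. unfold T at 1.
  match goal with |- filterlim _ _ (locally ?v) => replace v with
    (a * ((INR m * s - INR j) * Rpower x (INR m * s - INR j - 1)) * F (gg s x) +
     a * Rpower x (INR m * s - INR j) * (F' (gg s x) * (s / 2 * Rpower x (s - 1)))) end.
  exact H.
  unfold T. rewrite !S_INR.
  replace (INR m * s - (INR j + 1)) with (INR m * s - INR j - 1) by ring.
  replace ((INR m + 1) * s - (INR j + 1)) with ((INR m * s - INR j) + (s - 1)) by ring.
  rewrite Rpower_plus. ring.
Qed.

Lemma term_cat s a m j (F : R -> R) x : 0 < s -> I01 x ->
  (forall z, I01 z -> cat F z) -> cat (T s a m j F) x.
Proof.
  intros Hs Hx HF. assert (Hx0 : 0 < x) by (destruct Hx; lra).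
  unfold T. apply (cat_mult (fun y => a * Rpower y (INR m * s - INR j)) (fun y => F (gg s y))).
  eapply smooth_Cw. apply rpow_der; auto.
  eapply cat_comp; auto. intros y Hy; apply gg_I01; auto. apply gg_der; auto.
  apply HF. apply gg_I01; auto.
Qed.

Lemma rp s m j x : 0 < x -> Rpower x (INR m * s - INR j) = Rpower x s ^ m / x ^ j.
Proof.
  intros Hx. unfold Rminus. rewrite Rpower_plus, Rpower_Ropp.
  replace (INR m * s) with (s * INR m) by ring. rewrite <- Rpower_mult.
  rewrite (Rpower_pow m (Rpower x s)) by (unfold Rpower; apply exp_pos).
  rewrite (Rpower_pow j x) by auto. unfold Rdiv. reflexivity.
Qed.

Lemma alg1 s w b1 F0 G1 : 0 < s <= 1 -> 0 <= w <= s / 2 -> 1 <= b1 -> 0 <= F0 ->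
  Rabs G1 <= b1 * F0 -> Rabs ((s - 1) * F0 + w * G1) <= b1 * F0.
Proof.
  intros Hs Hw Hb HF H1.
  eapply Rle_trans. apply Rabs_triang. rewrite !Rabs_mult.
  rewrite (Rabs_left1 (s - 1)) by lra. rewrite (Rabs_pos_eq F0), (Rabs_pos_eq w) by lra.
  assert (w * Rabs G1 <= w * (b1 * F0)) by (apply Rmult_le_compat_l; lra).
  assert ((1 - s) * F0 <= (1 - s) * b1 * F0) by (apply Rmult_le_compat_r; nra).
  assert (0 <= (b1 * F0) * (s - w)) by (apply Rmult_le_pos; nra).
  nra.
Qed.

Lemma alg2 s w b1 b2 F0 G1 G2 : 0 < s <= 1 -> 0 <= w <= s / 2 -> 1 <= b1 -> 5 * b1 <= b2 -> 0 <= F0 ->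
  Rabs G1 <= b1 * F0 -> Rabs G2 <= b2 * F0 ->
  Rabs ((s - 1) * (s - 2) * F0 + 3 * (s - 1) * w * G1 + w ^ 2 * G2) <= b2 * F0.
Proof.
  intros Hs Hw Hb Hb2 HF H1 H2.
  eapply Rle_trans. apply Rabs_triang. eapply Rle_trans. apply Rplus_le_compat_r. apply Rabs_triang.
  rewrite !Rabs_mult.
  rewrite (Rabs_left1 (s - 1)), (Rabs_left1 (s - 2)) by lra.
  rewrite (Rabs_pos_eq F0), (Rabs_pos_eq w), (Rabs_pos_eq 3), (Rabs_pos_eq (w ^ 2)) by (try apply pow2_ge_0; lra).
  assert (3 * - (s - 1) * w * Rabs G1 <= 3 * - (s - 1) * w * (b1 * F0)).
  { apply Rmult_le_compat_l. assert (0 <= w * (1 - s)) by nra. nra. lra. }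
  assert (w ^ 2 * Rabs G2 <= w ^ 2 * (b2 * F0)) by (apply Rmult_le_compat_l; nra).
  assert (K : - (s - 1) * - (s - 2) + 3 * - (s - 1) * w * b1 + w ^ 2 * b2 <= b2).
  { assert ((1 - s) * (2 - s) <= 2 * b1) by nra.
    assert (3 * (1 - s) * w * b1 <= 3 / 2 * b1).
    { assert ((1 - s) * w <= 1 / 2) by nra. nra. }
    assert (w ^ 2 <= 1 / 4) by (simpl; nra).
    assert (w ^ 2 * b2 <= 1 / 4 * b2) by (apply Rmult_le_compat_r; lra). lra. }
  assert (K2 : (- (s - 1) * - (s - 2) + 3 * - (s - 1) * w * b1 + w ^ 2 * b2) * F0 <= b2 * F0)
    by (apply Rmult_le_compat_r; lra).
  nra.
Qed.

Lemma alg3 s w b1 b2 b3 F0 G1 G2 G3 : 0 < s <= 1 -> 0 <= w <= s / 2 -> 1 <= b1 -> 5 * b1 <= b2 ->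
  5 * b2 <= b3 -> 0 <= F0 ->
  Rabs G1 <= b1 * F0 -> Rabs G2 <= b2 * F0 -> Rabs G3 <= b3 * F0 ->
  Rabs ((s - 1) * (s - 2) * (s - 3) * F0 + (s - 1) * (7 * s - 11) * w * G1
        + 6 * (s - 1) * w ^ 2 * G2 + w ^ 3 * G3) <= b3 * F0.
Proof.
  intros Hs Hw Hb Hb2 Hb3 HF H1 H2 H3.
  eapply Rle_trans. apply Rabs_triang. eapply Rle_trans. apply Rplus_le_compat_r. apply Rabs_triang.
  eapply Rle_trans. apply Rplus_le_compat_r. apply Rplus_le_compat_r. apply Rabs_triang.
  set (A0 := (s - 1) * (s - 2) * (s - 3)).
  set (A1 := (s - 1) * (7 * s - 11) * w).
  set (A2 := 6 * (s - 1) * w ^ 2).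
  rewrite !Rabs_mult. rewrite (Rabs_pos_eq F0) by lra.
  assert (0 <= w ^ 3) by (apply pow_le; lra).
  rewrite (Rabs_pos_eq (w ^ 3)) by lra.
  assert (E0 : Rabs A0 <= 6). { unfold A0. rewrite Rabs_left1 by (assert (0 <= (1-s)*(2-s)) by nra; nra). nra. }
  assert (E1 : Rabs A1 <= 11 / 2). { unfold A1. rewrite Rabs_pos_eq by (assert (0 <= (1-s)*w) by nra; nra).
    assert ((1-s)*w <= 1/2) by nra. nra. }
  assert (E2 : Rabs A2 <= 3 / 2). { unfold A2. rewrite Rabs_left1 by (assert (0 <= (1-s)*w^2) by nra; nra).
    assert (w ^ 2 <= 1/4) by nra. assert ((1-s)*w^2 <= 1/4) by nra. nra. }
  assert (E3 : w ^ 3 <= 1 / 8). { assert (w ^ 2 <= 1/4) by nra. simpl in *. nra. }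
  assert (Rabs A0 * F0 <= 6 * b1 * F0) by (apply Rmult_le_compat_r; nra).
  assert (Rabs A1 * Rabs G1 <= 11/2 * (b1 * F0)) by (apply Rmult_le_compat; try apply Rabs_pos; lra).
  assert (Rabs A2 * Rabs G2 <= 3/2 * (b2 * F0)) by (apply Rmult_le_compat; try apply Rabs_pos; lra).
  assert (w ^ 3 * Rabs G3 <= 1/8 * (b3 * F0)) by (apply Rmult_le_compat; try apply Rabs_pos; lra).
  assert (b1 * F0 <= b2 / 5 * F0) by (apply Rmult_le_compat_r; lra).
  assert (b2 * F0 <= b3 / 5 * F0) by (apply Rmult_le_compat_r; lra).
  nra.
Qed.

Lemma dat_val f v w x : dat f v x -> v = w -> dat f w x.
Proof. intros H ->. exact H. Qed.

Section Psi.
Variables (s : R) (phi p1 p2 p3 : R -> R).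
Let a0 := s / 2.
Let e m j := INR m * s - INR j.
Let a1 := a0 * e 1%nat 1%nat * e 1%nat 2%nat.
Let a2 := a0 * e 1%nat 1%nat * (s / 2) + a0 * (s / 2) * e 2%nat 2%nat.
Let a3 := a0 * (s / 2) * (s / 2).
Definition psi0 := T s a0 1 1 phi.
Definition psi1 x := T s (a0 * e 1%nat 1%nat) 1 2 phi x + T s (a0 * (s / 2)) 2 2 p1 x.
Definition psi2 x := T s a1 1 3 phi x + T s a2 2 3 p1 x + T s a3 3 3 p2 x.
Definition psi3 x := T s (a1 * e 1%nat 3%nat) 1 4 phi x + T s (a1 * (s / 2) + a2 * e 2%nat 3%nat) 2 4 p1 x
  + T s (a2 * (s / 2) + a3 * e 3%nat 3%nat) 3 4 p2 x + T s (a3 * (s / 2)) 4 4 p3 x.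

Hypothesis Hs : 0 < s.
Hypothesis D1 : forall x, I01 x -> dat phi (p1 x) x.
Hypothesis D2 : forall x, I01 x -> dat p1 (p2 x) x.
Hypothesis D3 : forall x, I01 x -> dat p2 (p3 x) x.
Hypothesis C3 : forall x, I01 x -> cat p3 x.

Lemma psi0_d x : I01 x -> dat psi0 (psi1 x) x.
Proof. intros Hx. apply term_dat; auto. Qed.

Lemma psi1_d x : I01 x -> dat psi1 (psi2 x) x.
Proof.
  intros Hx. eapply dat_val.
  apply (dat_plus (T s (a0 * e 1%nat 1%nat) 1 2 phi) (T s (a0 * (s / 2)) 2 2 p1)).
  apply term_dat; auto. apply term_dat; auto.
  unfold psi2, a1, a2, a3, e, a0, T. ring.
Qed.

Lemma psi2_d x : I01 x -> dat psi2 (psi3 x) x.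
Proof.
  intros Hx. eapply dat_val.
  apply (dat_plus (fun y => T s a1 1 3 phi y + T s a2 2 3 p1 y) (T s a3 3 3 p2)).
  apply (dat_plus (T s a1 1 3 phi) (T s a2 2 3 p1)).
  apply term_dat; auto. apply term_dat; auto. apply term_dat; auto.
  unfold psi3, e, T. ring.
Qed.

Lemma psi3_c x : I01 x -> cat psi3 x.
Proof.
  intros Hx. unfold psi3.
  apply (cat_plus (fun y => T s (a1 * e 1%nat 3%nat) 1 4 phi y + T s (a1 * (s / 2) + a2 * e 2%nat 3%nat) 2 4 p1 y
    + T s (a2 * (s / 2) + a3 * e 3%nat 3%nat) 3 4 p2 y)).
  apply (cat_plus (fun y => T s (a1 * e 1%nat 3%nat) 1 4 phi y + T s (a1 * (s / 2) + a2 * e 2%nat 3%nat) 2 4 p1 y)).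
  apply (cat_plus (T s (a1 * e 1%nat 3%nat) 1 4 phi)).
  all: apply term_cat; [exact Hs | exact Hx | intros z Hz].
  all: first [ apply C3; auto | eapply dat_cont; apply D1; auto | eapply dat_cont; apply D2; auto | eapply dat_cont; apply D3; auto].
Qed.
End Psi.

Lemma INR1 : INR 1 = 1. Proof. reflexivity. Qed.
Lemma INR2 : INR 2 = 2. Proof. simpl; ring. Qed.
Lemma INR3 : INR 3 = 3. Proof. simpl; ring. Qed.
Lemma INR4 : INR 4 = 4. Proof. simpl; ring. Qed.

Lemma bounds s b1 b2 b3 (phi p1 p2 p3 : R -> R) x : 0 < s <= 1 -> 1 <= b1 -> 5 * b1 <= b2 -> 5 * b2 <= b3 ->
  I01 x ->
  (forall y, I01 y -> 0 <= phi y /\ Rabs (p1 y) <= b1 / y * phi y /\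
      Rabs (p2 y) <= b2 / y ^ 2 * phi y /\ Rabs (p3 y) <= b3 / y ^ 3 * phi y) ->
  0 <= psi0 s phi x /\ Rabs (psi1 s phi p1 x) <= b1 / x * psi0 s phi x /\
  Rabs (psi2 s phi p1 p2 x) <= b2 / x ^ 2 * psi0 s phi x /\
  Rabs (psi3 s phi p1 p2 p3 x) <= b3 / x ^ 3 * psi0 s phi x.
Proof.
  intros Hs Hb1 Hb2 Hb3 Hx HB.
  assert (Hx0 : 0 < x) by (destruct Hx; lra).
  pose proof (P_bounds s x (proj1 Hs) Hx) as HP.
  pose (P := Rpower x s). fold P in HP.
  pose (y := gg s x).
  assert (Hy : I01 y) by (apply gg_I01; tauto).
  assert (HyP : y = (P + 1) / 2) by reflexivity.
  destruct (HB y Hy) as [F0 [B1 [B2 B3]]].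
  assert (Hy0 : 0 < y) by (destruct Hy; lra).
  pose (w := s / 2 * P / y).
  assert (Hw : 0 <= w <= s / 2).
  { assert (HPy : P / y <= 1).
    { apply Rmult_le_reg_r with y; [lra|]. unfold Rdiv. rewrite Rmult_assoc, Rinv_l by lra. lra. }
    assert (0 <= P / y) by (apply Rdiv_le_0_compat; lra).
    replace w with (s / 2 * (P / y)) by (unfold w; field; lra). split; nra. }
  pose (G1 := y * p1 y). pose (G2 := y ^ 2 * p2 y). pose (G3 := y ^ 3 * p3 y).
  assert (HG1 : Rabs G1 <= b1 * phi y).
  { unfold G1. rewrite Rabs_mult, (Rabs_pos_eq y) by lra.
    replace (b1 * phi y) with (y * (b1 / y * phi y)) by (field; lra).
    apply Rmult_le_compat_l; lra. }
  assert (HG2 : Rabs G2 <= b2 * phi y).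
  { unfold G2. rewrite Rabs_mult, (Rabs_pos_eq (y ^ 2)) by (apply pow_le; lra).
    replace (b2 * phi y) with (y ^ 2 * (b2 / y ^ 2 * phi y)) by (field; lra).
    apply Rmult_le_compat_l. apply pow_le; lra. lra. }
  assert (HG3 : Rabs G3 <= b3 * phi y).
  { unfold G3. rewrite Rabs_mult, (Rabs_pos_eq (y ^ 3)) by (apply pow_le; lra).
    replace (b3 * phi y) with (y ^ 3 * (b3 / y ^ 3 * phi y)) by (field; lra).
    apply Rmult_le_compat_l. apply pow_le; lra. lra. }
  assert (E0 : psi0 s phi x = s / 2 * P / x * phi y).
  { unfold psi0, T. rewrite rp by lra. fold P y. field. lra. }
  assert (E1 : psi1 s phi p1 x = s / 2 * P / x ^ 2 * ((s - 1) * phi y + w * G1)).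
  { unfold psi1, T. rewrite !rp by lra. fold P y. unfold w, G1. rewrite ?INR1, ?INR2. field. lra. }
  assert (E2 : psi2 s phi p1 p2 x = s / 2 * P / x ^ 3 *
     ((s - 1) * (s - 2) * phi y + 3 * (s - 1) * w * G1 + w ^ 2 * G2)).
  { unfold psi2, T. rewrite !rp by lra. fold P y. unfold w, G1, G2. rewrite ?INR1, ?INR2, ?INR3. field. lra. }
  assert (E3 : psi3 s phi p1 p2 p3 x = s / 2 * P / x ^ 4 *
     ((s - 1) * (s - 2) * (s - 3) * phi y + (s - 1) * (7 * s - 11) * w * G1
        + 6 * (s - 1) * w ^ 2 * G2 + w ^ 3 * G3)).
  { unfold psi3, T. rewrite !rp by lra. fold P y. unfold w, G1, G2, G3. rewrite ?INR1, ?INR2, ?INR3, ?INR4. field. lra. }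
  assert (K1 : 0 <= s / 2 * P / x ^ 2) by (apply Rdiv_le_0_compat; [nra | apply pow_lt; lra]).
  assert (K2 : 0 <= s / 2 * P / x ^ 3) by (apply Rdiv_le_0_compat; [nra | apply pow_lt; lra]).
  assert (K3 : 0 <= s / 2 * P / x ^ 4) by (apply Rdiv_le_0_compat; [nra | apply pow_lt; lra]).
  rewrite E0, E1, E2, E3. split; [|split; [|split]].
  - apply Rmult_le_pos; [apply Rdiv_le_0_compat; nra | lra].
  - rewrite Rabs_mult, (Rabs_pos_eq _ K1).
    replace (b1 / x * (s / 2 * P / x * phi y)) with (s / 2 * P / x ^ 2 * (b1 * phi y)) by (field; lra).
    apply Rmult_le_compat_l; auto. apply alg1; auto; lra.
  - rewrite Rabs_mult, (Rabs_pos_eq _ K2).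
    replace (b2 / x ^ 2 * (s / 2 * P / x * phi y)) with (s / 2 * P / x ^ 3 * (b2 * phi y)) by (field; lra).
    apply Rmult_le_compat_l; auto. apply alg2 with b1; auto; lra.
  - rewrite Rabs_mult, (Rabs_pos_eq _ K3).
    replace (b3 / x ^ 3 * (s / 2 * P / x * phi y)) with (s / 2 * P / x ^ 4 * (b3 * phi y)) by (field; lra).
    apply Rmult_le_compat_l; auto. apply alg3 with b1 b2; auto; lra.
Qed.

Lemma N2_eq beta (phi : R -> R) y : 0 < beta -> I01 y -> N2 beta phi y = psi0 (1 / beta) phi y.
Proof.
  intros Hb Hy. assert (Hy0 : 0 < y) by (destruct Hy; lra).
  unfold N2, psi0, T. change (g2 beta) with (gg (1 / beta)).
  rewrite (is_derive_unique _ _ _ (gg_der (1 / beta) y Hy0)).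
  rewrite INR1. replace (1 * (1 / beta) - 1) with (1 / beta - 1) by ring. ring.
Qed.

Theorem lemmaA1 :
  exists kappa1 kappa2 : R, 1 < kappa1 /\ 1 < kappa2 /\
    forall b1 b2 b3 : R,
      1 <= b1 -> kappa1 * b1 <= b2 -> kappa2 * b2 <= b3 ->
      forall beta : R, 1 <= beta ->
      forall phi : R -> R,
        C3class b1 b2 b3 phi -> C3class b1 b2 b3 (N2 beta phi).
Proof.
  exists 5, 5. split; [lra | split; [lra |]].
  intros b1 b2 b3 Hb1 Hb2 Hb3 beta Hbeta phi [p1 [p2 [p3 [D1 [D2 [D3 [C3 HB]]]]]]].
  pose (s := 1 / beta).
  assert (Hs : 0 < s <= 1).
  { unfold s. split. apply Rdiv_lt_0_compat; lra.
    apply Rmult_le_reg_r with beta; [lra|]. unfold Rdiv. rewrite Rmult_assoc, Rinv_l by lra. lra. }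
  pose proof (deriv_equiv2 _ _ D1) as D1'.
  pose proof (deriv_equiv2 _ _ D2) as D2'.
  pose proof (deriv_equiv2 _ _ D3) as D3'.
  pose proof (cont_equiv2 _ C3) as C3'.
  exists (psi1 s phi p1), (psi2 s phi p1 p2), (psi3 s phi p1 p2 p3).
  split; [|split; [|split; [|split]]].
  - apply deriv_equiv. intros x Hx.
    apply dat_ext with (f := psi0 s phi); auto.
    intros y Hy. symmetry. apply N2_eq; auto; lra.
    apply psi0_d; tauto.
  - apply deriv_equiv. intros x Hx. apply psi1_d; tauto.
  - apply deriv_equiv. intros x Hx. apply psi2_d; tauto.
  - apply cont_equiv. intros x Hx. apply psi3_c; tauto.
  - intros x Hx. rewrite (N2_eq beta phi x) by (auto; lra).
    apply bounds; auto.
Qed.
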